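(* Let $h=u+v+u^{-1}+v^{-1}+u^{-1}v^{-1}\in A=\mathbb C\langle u^{\pm1},v^{\pm1}\rangle$. For all integers $N,M>0$, $\{h^N,h^M\}_K\in[A,A]$, i.e. $\{h^N,h^M\}_K\equiv0\bmod[A,A]$.
   Context: $A$ is the group algebra over $\mathbb C$ of the free group on $u,v$. $[A,A]$ is the linear span of all $ab-ba$, $a,b\in A$. $\mu:A\otimes A\to A$, $\mu(a\otimes b)=ab$; $A\otimes A$ has componentwise multiplication. The double bracket $\llbracket\cdot\rrbracket_K:A\otimes A\to A\otimes A$ is the linear map with $\llbracket u\otimes v\rrbracket_K=-vu\otimes1$, $\llbracket v\otimes u\rrbracket_K=uv\otimes1$, $\llbracket u\otimes u\rrbracket_K=\llbracket v\otimes v\rrbracket_K=0$, extended by the Leibniz rules $\llbracket a\otimes bc\rrbracket_K=\llbracket a\otimes b\rrbracket_K(1\otimes c)+(b\otimes1)\llbracket a\otimes c\rrbracket_K$ and $\llbracket ab\otimes c\rrbracket_K=\llbracket a\otimes c\rrbracket_K(b\otimes1)+(1\otimes a)\llbracket b\otimes c\rrbracket_K$ (so for monomials $a=a_1\cdots a_k$, $b=b_1\cdots b_m$ in letters $u^{\pm1},v^{\pm1}$, with $\llbracket a_i\otimes b_j\rrbracket_K=x_{ij}\otimes y_{ij}$, $\llbracket a\otimes b\rrbracket_K=\sum_{i,j}(b_1\cdots b_{j-1}x_{ij}a_{i+1}\cdots a_k)\otimes(a_1\cdots a_{i-1}y_{ij}b_{j+1}\cdots b_m)$; the values on inverse letters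 are those forced by the Leibniz rules, e.g. $\llbracket u^{-1}\otimes v^{-1}\rrbracket_K=-1\otimes u^{-1}v^{-1}$, $\llbracket u^{-1}\otimes v\rrbracket_K=v\otimes u^{-1}$, $\llbracket u\otimes v^{-1}\rrbracket_K=u\otimes v^{-1}$, $\llbracket v^{-1}\otimes u^{-1}\rrbracket_K=1\otimes v^{-1}u^{-1}$, $\llbracket v\otimes u^{-1}\rrbracket_K=-v\otimes u^{-1}$, $\llbracket v^{-1}\otimes u\rrbracket_K=-u\otimes v^{-1}$). The bracket is $\{a,b\}_K=\mu(\llbracket a\otimes b\rrbracket_K)$. *)

(* Defs.v *)
(* C is modelled as R[i] (complex numbers over a real field
   R : realType, from mathcomp-real-closed's complex.v). *)
From HB Require Import structures.
From mathcomp Require Import all_boot all_order all_algebra.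
From mathcomp Require Import reals complex.
Set Implicit Arguments. Unset Strict Implicit. Unset Printing Implicit Defensive.
Import Order.TTheory GRing.Theory Num.Theory.
Local Open Scope ring_scope.

(* Letters u^{+-1}, v^{+-1}: (is_v, is_inverse). *)
Definition letter := (bool * bool)%type.
Definition U  : letter := (false, false).
Definition Ui : letter := (false, true).
Definition V  : letter := (true, false).
Definition Vi : letter := (true, true).
Definition linv (l : letter) : letter := (l.1, ~~ l.2).

Definition word := seq letter.

Definition reduce (w : word) : word :=
  foldr (fun l acc => match acc with
                      | l' :: acc' => if l' == linv l then acc' else l :: acc
                      | [::] => [:: l] end) [::] w.

Section GroupAlgebra.
Variable K : comRingType.

(* An element of the group algebra K[F(u,v)] is represented by a formal finite
   linear combination of words; its coefficient on a group element g (a reduced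
   word) is the sum of the coefficients of the words reducing to g. *)
Definition alg := seq (K * word).
Definition coefA (x : alg) (g : word) : K := \sum_(p <- x | reduce p.2 == g) p.1.
Definition eqA (x y : alg) : Prop := forall g, coefA x g = coefA y g.

Definition addA (x y : alg) : alg := x ++ y.
Definition scaleA (c : K) (x : alg) : alg := [seq (c * p.1, p.2) | p <- x].
Definition mulA (x y : alg) : alg :=
  flatten [seq [seq (p.1 * q.1, p.2 ++ q.2) | q <- y] | p <- x].
Definition oneA : alg := [:: (1, [::])].
Definition powA (x : alg) (n : nat) : alg := iter n (mulA x) oneA.

Definition in_commA (x : alg) : Prop :=
  exists s : seq (K * alg * alg),
    eqA x (flatten [seq scaleA p.1.1 (addA (mulA p.1.2 p.2)
                                        (scaleA (-1) (mulA p.2 p.1.2))) | p <- s]).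

(* Elements of A (x) A: formal combinations of pairs of words. *)
Definition alg2 := seq (K * (word * word)).

Definition dbr_letter (a b : letter) : alg2 :=
  match a, b with
  | (false, false), (true, false) => [:: (-1, ([:: V; U], [::]))]        (* u (x) v *)
  | (true, false), (false, false) => [:: (1, ([:: U; V], [::]))]         (* v (x) u *)
  | (false, true), (true, true) => [:: (-1, ([::], [:: Ui; Vi]))]        (* u^-1 (x) v^-1 *)
  | (false, true), (true, false) => [:: (1, ([:: V], [:: Ui]))]          (* u^-1 (x) v *)
  | (false, false), (true, true) => [:: (1, ([:: U], [:: Vi]))]          (* u (x) v^-1 *)
  | (true, true), (false, true) => [:: (1, ([::], [:: Vi; Ui]))]         (* v^-1 (x) u^-1 *)
  | (true, false), (false, true) => [:: (-1, ([:: V], [:: Ui]))]         (* v (x) u^-1 *)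
  | (true, true), (false, false) => [:: (-1, ([:: U], [:: Vi]))]         (* v^-1 (x) u *)
  | _, _ => [::]   (* brackets of a generator (or inverse) with itself / its inverse *)
  end.

(* Double bracket of two words a = a_1..a_k, b = b_1..b_m (0-based indices):
   sum_{i,j} (b_1..b_{j-1} x_ij a_{i+1}..a_k) (x) (a_1..a_{i-1} y_ij b_{j+1}..b_m). *)
Definition dbr_word (a b : word) : alg2 :=
  flatten [seq flatten [seq
     [seq (t.1, (take j b ++ t.2.1 ++ drop i.+1 a, take i a ++ t.2.2 ++ drop j.+1 b))
       | t <- dbr_letter (nth U a i) (nth U b j)]
     | j <- iota 0 (size b)] | i <- iota 0 (size a)].

(* {x, y}_K = mu(dbr(x (x) y)), extended bilinearly from group elements
   (reduced words). *)
Definition bracketK (x y : alg) : alg :=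
  flatten [seq flatten [seq
     [seq (p.1 * q.1 * t.1, t.2.1 ++ t.2.2) | t <- dbr_word (reduce p.2) (reduce q.2)]
     | q <- y] | p <- x].

Definition hA : alg :=
  [:: (1, [:: U]); (1, [:: V]); (1, [:: Ui]); (1, [:: Vi]); (1, [:: Ui; Vi])].

End GroupAlgebra.

(* Main.v *)
Require Import Defs.
From HB Require Import structures.
From mathcomp Require Import all_boot all_order all_algebra.
From mathcomp Require Import reals complex.
From mathcomp Require Import ring zify.
Set Implicit Arguments. Unset Strict Implicit. Unset Printing Implicit Defensive.
Import Order.TTheory GRing.Theory Num.Theory.

Module Aux.
Local Open Scope ring_scope.
Notation mulA := Defs.mulA.
Notation scaleA := Defs.scaleA.
Notation addA := Defs.addA.
Notation oneA := Defs.oneA.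
Notation powA := Defs.powA.
Notation coefA := Defs.coefA.
Notation eqA := Defs.eqA.
Notation hA := Defs.hA.

Definition step (l : letter) (acc : word) : word :=
  match acc with
  | l' :: acc' => if l' == linv l then acc' else l :: acc
  | [::] => [:: l] end.

Lemma reduceE w : reduce w = foldr step [::] w. Proof. by []. Qed.

Lemma linvK l : linv (linv l) = l. Proof. by case: l => a b; rewrite /linv /= negbK. Qed.

Fixpoint rdd (w : word) : bool :=
  match w with
  | x :: ((y :: _) as w') => (y != linv x) && rdd w'
  | _ => true end.

Lemma rdd_step l w : rdd w -> rdd (step l w).
Proof.
case: w => [|y w] //= H.
case: ifP => Hy.
  by move: H; case: w => [|z w] //= /andP[].
by rewrite /= Hy.
Qed.

Lemma rdd_foldr w u : rdd w -> rdd (foldr step w u).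
Proof. by move=> H; elim: u => //= l u IH; apply: rdd_step. Qed.

Lemma rdd_reduce w : rdd (reduce w).
Proof. by rewrite reduceE; apply: rdd_foldr. Qed.

Lemma step_inv l w : rdd w -> step l (step (linv l) w) = w.
Proof.
case: w => [|y w] /=; first by rewrite eqxx.
move=> H; case: ifP => Hy.
  move/eqP: Hy; rewrite linvK => Hy; subst y.
  case: w H => [|z w] //=.
  by case/andP=> Hz _; rewrite (negbTE Hz).
by rewrite /= eqxx.
Qed.

Lemma step_foldr l w v : rdd w -> rdd v ->
  step l (foldr step w v) = foldr step w (step l v).
Proof.
move=> Hw Hv; case: v Hv => [|y v] //= Hv.
case: ifP => Hy //.
move/eqP: Hy => ->.
by rewrite step_inv // rdd_foldr.
Qed.

Lemma foldr_red w u : rdd w -> foldr step w u = foldr step w (reduce u).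
Proof.
move=> Hw; elim: u => //= l u IH.
by rewrite IH step_foldr // rdd_reduce.
Qed.

Lemma reduce_cat u v : reduce (u ++ v) = foldr step (reduce v) u.
Proof. by rewrite !reduceE foldr_cat. Qed.

Lemma reduce_ctx A w C : reduce (A ++ w ++ C) = reduce (A ++ reduce w ++ C).
Proof.
rewrite !reduce_cat; congr foldr.
rewrite (foldr_red _ (rdd_reduce C)); congr foldr.
Qed.

Lemma reduce_congr A w1 w2 C : reduce w1 = reduce w2 ->
  reduce (A ++ w1 ++ C) = reduce (A ++ w2 ++ C).
Proof. by move=> H; rewrite reduce_ctx H -reduce_ctx. Qed.

Lemma reduce_idem w : reduce (reduce w) = reduce w.
Proof.
by have := reduce_ctx [::] w [::]; rewrite /= !cats0 => <-.
Qed.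

Lemma reduce_cancel p l q : reduce (p ++ [:: l; linv l] ++ q) = reduce (p ++ q).
Proof.
rewrite reduce_ctx /= eqxx.
by [].
Qed.

Lemma reduce_dec a : reduce a = a \/ exists p l q, a = p ++ [:: l; linv l] ++ q.
Proof.
elim: a => [|x a [IH|[p [l [q ->]]]]]; first by left.
- case: a IH => [|y a] IH; first by left.
  have -> : reduce [:: x, y & a] = step x (reduce (y :: a)) by [].
  rewrite IH /=.
  case: ifP => Hy; last by left.
  right; exists [::], x, a; by move/eqP: Hy => ->.
- by right; exists (x :: p), l, q.
Qed.
Section S2.
Variable K : comRingType.

Lemma dropl_cat (T : Type) n (s1 s2 : seq T) : (n <= size s1)%N -> drop n (s1 ++ s2) = drop n s1 ++ s2.
Proof.
elim: s1 n => [|x s1 IH] [|n] //=.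
- by move=> _; rewrite drop0.
- by rewrite ltnS => H; rewrite IH.
Qed.

Definition dterm (a b : word) (i j : nat) (t : K * (word * word)) : K * (word * word) :=
  (t.1, (take j b ++ t.2.1 ++ drop i.+1 a, take i a ++ t.2.2 ++ drop j.+1 b)).

Lemma dbr_sum (a b : word) (phi : K * (word * word) -> K) :
  \sum_(t <- dbr_word K a b) phi t =
  \sum_(i <- iota 0 (size a)) \sum_(j <- iota 0 (size b))
     \sum_(t <- dbr_letter K (nth U a i) (nth U b j)) phi (dterm a b i j t).
Proof.
rewrite /dbr_word big_flatten big_map; apply: eq_bigr => i _.
rewrite big_flatten big_map; apply: eq_bigr => j _.
by rewrite big_map.
Qed.

Lemma DW1 (a1 a2 b : word) (phi : K * (word * word) -> K) :
  \sum_(t <- dbr_word K (a1 ++ a2) b) phi t =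
  \sum_(t <- dbr_word K a1 b) phi (t.1, (t.2.1 ++ a2, t.2.2)) +
  \sum_(t <- dbr_word K a2 b) phi (t.1, (t.2.1, a1 ++ t.2.2)).
Proof.
rewrite !dbr_sum size_cat iotaD big_cat /=; congr (_ + _).
  rewrite big_seq [in RHS]big_seq; apply: eq_bigr => i; rewrite mem_iota /= => Hi.
  apply: eq_bigr => j _; rewrite nth_cat Hi; apply: eq_bigr => t _.
  rewrite /dterm /= takel_cat ?(ltnW Hi) // dropl_cat //.
  by rewrite -!catA.
rewrite -[X in iota X]addn0 iotaDl big_map; apply: eq_bigr => i _.
apply: eq_bigr => j _; rewrite nth_cat ltnNge leq_addr /= addKn.
apply: eq_bigr => t _; rewrite /dterm /=.
rewrite take_cat ltnNge leq_addr /= addKn drop_cat ltnNge ltnW ?ltnS ?leq_addr //=.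
by rewrite ?add0n -addnS addKn -!catA.
Qed.

Lemma DW2 (a b1 b2 : word) (phi : K * (word * word) -> K) :
  \sum_(t <- dbr_word K a (b1 ++ b2)) phi t =
  \sum_(t <- dbr_word K a b1) phi (t.1, (t.2.1, t.2.2 ++ b2)) +
  \sum_(t <- dbr_word K a b2) phi (t.1, (b1 ++ t.2.1, t.2.2)).
Proof.
rewrite !dbr_sum -big_split; apply: eq_bigr => i _.
rewrite size_cat iotaD big_cat /=; congr (_ + _).
  rewrite big_seq [in RHS]big_seq; apply: eq_bigr => j; rewrite mem_iota /= => Hj.
  rewrite nth_cat Hj; apply: eq_bigr => t _.
  rewrite /dterm /= takel_cat ?(ltnW Hj) // dropl_cat //.
  by rewrite -!catA.
rewrite -[X in iota X]addn0 iotaDl big_map; apply: eq_bigr => j _.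
rewrite nth_cat ltnNge leq_addr /= addKn.
apply: eq_bigr => t _; rewrite /dterm /=.
rewrite take_cat ltnNge leq_addr /= addKn drop_cat ltnNge ltnW ?ltnS ?leq_addr //=.
by rewrite ?add0n -addnS addKn -!catA.
Qed.


Definition ind (g w : word) : K := (reduce w == g)%:R.

Lemma ind_congr g A w1 w2 C : reduce w1 = reduce w2 -> ind g (A ++ w1 ++ C) = ind g (A ++ w2 ++ C).
Proof. by move=> H; rewrite /ind (reduce_congr _ _ H). Qed.

Definition S g P a b r s := \sum_(t <- dbr_word K a b) t.1 * ind g (P ++ t.2.1 ++ r ++ t.2.2 ++ s).

Lemma SL1 g P a1 a2 b r s : S g P (a1 ++ a2) b r s = S g P a1 b (a2 ++ r) s + S g P a2 b (r ++ a1) s.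
Proof. by rewrite /S DW1 /=; congr (_ + _); apply: eq_bigr => t _; rewrite !catA. Qed.

Lemma SL2 g P a b1 b2 r s : S g P a (b1 ++ b2) r s = S g P a b1 r (b2 ++ s) + S g (P ++ b1) a b2 r s.
Proof. by rewrite /S DW2 /=; congr (_ + _); apply: eq_bigr => t _; rewrite !catA. Qed.

Lemma S_congr_r g P a b r r' s : reduce r = reduce r' -> S g P a b r s = S g P a b r' s.
Proof.
move=> H; apply: eq_bigr => t _; congr (_ * _).
by have := ind_congr g (P ++ t.2.1) (t.2.2 ++ s) H; rewrite -!catA.
Qed.

Lemma S_congr_s g P a b r s s' : reduce s = reduce s' -> S g P a b r s = S g P a b r s'.
Proof.
move=> H; apply: eq_bigr => t _; congr (_ * _).
by have := ind_congr g (P ++ t.2.1 ++ r ++ t.2.2) [::] H; rewrite !cats0 -!catA.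
Qed.

Lemma S_congr_P g P P' a b r s : reduce P = reduce P' -> S g P a b r s = S g P' a b r s.
Proof.
move=> H; apply: eq_bigr => t _; congr (_ * _).
by have := ind_congr g [::] (t.2.1 ++ r ++ t.2.2 ++ s) H.
Qed.

Lemma LL1 (l m : letter) (F : word -> word -> K) :
  \sum_(t <- dbr_letter K l m) t.1 * F (reduce (t.2.1 ++ [:: linv l])) (reduce t.2.2) +
  \sum_(t <- dbr_letter K (linv l) m) t.1 * F (reduce t.2.1) (reduce (l :: t.2.2)) = 0.
Proof.
by case: l => [[] []]; case: m => [[] []]; rewrite /= ?big_cons ?big_nil /=; ring.
Qed.


Lemma LL2 (l m : letter) (F : word -> word -> K) :
  \sum_(t <- dbr_letter K l m) t.1 * F (reduce t.2.1) (reduce (t.2.2 ++ [:: linv m])) +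
  \sum_(t <- dbr_letter K l (linv m)) t.1 * F (reduce (m :: t.2.1)) (reduce t.2.2) = 0.
Proof.
by case: l => [[] []]; case: m => [[] []]; rewrite /= ?big_cons ?big_nil /=; ring.
Qed.

Lemma indF g A u M v C : ind g (A ++ u ++ M ++ v ++ C) = ind g (A ++ reduce u ++ M ++ reduce v ++ C).
Proof.
rewrite (@ind_congr g A u (reduce u) (M ++ v ++ C)) ?reduce_idem //.
have := @ind_congr g (A ++ reduce u ++ M) v (reduce v) C; rewrite reduce_idem -!catA; apply.
by [].
Qed.

Lemma cancel_a g P l b R s : S g P [:: l] b ([:: linv l] ++ R) s + S g P [:: linv l] b (R ++ [:: l]) s = 0.
Proof.
have E1 : forall l0 : letter, iota 0 (size [:: l0]) = [:: 0%N] by [].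
rewrite /S !dbr_sum !E1 !big_cons !big_nil !addr0 -big_split.
apply: big1 => j _.
change (nth U [:: l] 0) with l; change (nth U [:: linv l] 0) with (linv l).
set F := (fun u v => ind g ((P ++ take j b) ++ u ++ R ++ v ++ (drop j.+1 b ++ s))).
apply: etrans (LL1 l (nth U b j) F); rewrite /F.
congr (_ + _); apply: eq_bigr => t _; rewrite -indF /dterm /=; congr (_ * ind g _).
  by rewrite !cats0 -!catA.
by rewrite !cats0 -!catA.
Qed.


Lemma cancel_b g P a m r s : S g P a [:: m] r ([:: linv m] ++ s) + S g (P ++ [:: m]) a [:: linv m] r s = 0.
Proof.
have E1 : forall l0 : letter, iota 0 (size [:: l0]) = [:: 0%N] by [].
rewrite /S !dbr_sum -big_split.
apply: big1 => i _.
rewrite !E1 !big_cons !big_nil !addr0.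
change (nth U [:: m] 0) with m; change (nth U [:: linv m] 0) with (linv m).
set F := (fun u v => ind g (P ++ u ++ (drop i.+1 a ++ r ++ take i a) ++ v ++ s)).
apply: etrans (LL2 (nth U a i) m F); rewrite /F.
congr (_ + _); apply: eq_bigr => t _; rewrite -indF /dterm /=; congr (_ * ind g _).
  by rewrite !cats0 -!catA.
by rewrite !cats0 -!catA.
Qed.

Lemma S_cancel_a g P p l q b r s :
  S g P (p ++ [:: l; linv l] ++ q) b r s = S g P (p ++ q) b r s.
Proof.
rewrite !SL1.
have -> : S g P [:: l; linv l] b (q ++ r ++ p) s = 0.
  by rewrite -[ [:: l; linv l] ]/([:: l] ++ [:: linv l]) SL1 cancel_a.
rewrite add0r (@S_congr_r g P p b (([:: l; linv l] ++ q) ++ r) (q ++ r)); last first.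
  by rewrite -catA (reduce_cancel [::] l (q ++ r)).
rewrite (@S_congr_r g P q b ((r ++ p) ++ [:: l; linv l]) (r ++ p)) //.
by have := reduce_cancel (r ++ p) l [::]; rewrite !cats0.
Qed.

Lemma S_cancel_b g P a p m q r s :
  S g P a (p ++ [:: m; linv m] ++ q) r s = S g P a (p ++ q) r s.
Proof.
rewrite !SL2.
have -> : S g (P ++ p) a [:: m; linv m] r (q ++ s) = 0.
  by rewrite -[ [:: m; linv m] ]/([:: m] ++ [:: linv m]) SL2 cancel_b.
rewrite add0r (@S_congr_s g P a p r (([:: m; linv m] ++ q) ++ s) (q ++ s)); last first.
  by rewrite -catA (reduce_cancel [::] m (q ++ s)).
rewrite (@S_congr_P g ((P ++ p) ++ [:: m; linv m]) (P ++ p)) //.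
by have := reduce_cancel (P ++ p) m [::]; rewrite !cats0.
Qed.

Lemma S_red_a g P a b r s : S g P a b r s = S g P (reduce a) b r s.
Proof.
move: {2}(size a) (leqnn (size a)) => n; elim: n a => [|n IH] a Ha.
  by case: a Ha.
case: (reduce_dec a) => [-> //|[p [l [q Ea]]]].
rewrite Ea S_cancel_a reduce_cancel IH //.
by move: Ha; rewrite Ea !size_cat /=; lia.
Qed.

Lemma S_red_b g P a b r s : S g P a b r s = S g P a (reduce b) r s.
Proof.
move: {2}(size b) (leqnn (size b)) => n; elim: n b => [|n IH] b Hb.
  by case: b Hb.
case: (reduce_dec b) => [-> //|[p [l [q Eb]]]].
rewrite Eb S_cancel_b reduce_cancel IH //.
by move: Hb; rewrite Eb !size_cat /=; lia.
Qed.


Lemma coefAE (x : alg K) g : coefA x g = \sum_(p <- x) p.1 * ind g p.2.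
Proof.
rewrite /coefA big_mkcond; apply: eq_bigr => p _.
by rewrite /ind; case: (reduce p.2 == g); rewrite ?mulr1 ?mulr0.
Qed.

Lemma ind_red g w : ind g (reduce w) = ind g w.
Proof. by rewrite /ind reduce_idem. Qed.

Lemma coefA_cat (x y : alg K) g : coefA (x ++ y) g = coefA x g + coefA y g.
Proof. by rewrite !coefAE big_cat. Qed.

Lemma sum_mulA (X Y : alg K) (F : K * word -> K) :
  \sum_(p <- mulA X Y) F p = \sum_(a <- X) \sum_(b <- Y) F (a.1 * b.1, a.2 ++ b.2).
Proof.
rewrite /mulA big_flatten big_map; apply: eq_bigr => a _; by rewrite big_map.
Qed.

Lemma sum_scaleA c (X : alg K) (F : K * word -> K) :
  \sum_(p <- scaleA c X) F p = \sum_(a <- X) F (c * a.1, a.2).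
Proof. by rewrite /scaleA big_map. Qed.

Lemma coefA_scale c (x : alg K) g : coefA (scaleA c x) g = c * coefA x g.
Proof. by rewrite !coefAE sum_scaleA mulr_sumr; apply: eq_bigr => p _; rewrite mulrA. Qed.

Lemma coefA_mul (X Y : alg K) g :
  coefA (mulA X Y) g = \sum_(a <- X) \sum_(b <- Y) a.1 * b.1 * ind g (a.2 ++ b.2).
Proof. by rewrite coefAE sum_mulA. Qed.

Lemma sum_pred1_seq (T : eqType) (U0 : seq T) (i : T) (F : T -> K) :
  uniq U0 -> i \in U0 -> \sum_(j <- U0 | i == j) F j = F i.
Proof.
elim: U0 => // x U0 IH /= /andP[Hx Hu]; rewrite in_cons big_cons.
case: eqP => [Ei _|Hne /= Hi].
  subst i; rewrite big1_seq ?addr0 //= => j /andP[/eqP Ej Hj].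
  by subst j; rewrite Hj in Hx.
by rewrite IH.
Qed.

Lemma regroup (Z : alg K) (f : word -> K) (U0 : seq word) :
  uniq U0 -> (forall r, r \in Z -> reduce r.2 \in U0) ->
  \sum_(r <- Z) r.1 * f (reduce r.2) = \sum_(w <- U0) coefA Z w * f w.
Proof.
move=> HU HZ.
transitivity (\sum_(w <- U0) \sum_(r <- Z | reduce r.2 == w) r.1 * f (reduce r.2)); last first.
  apply: eq_bigr => w _; rewrite /coefA mulr_suml; apply: eq_bigr => r /eqP -> //.
rewrite (exchange_big_dep xpredT) //=.
rewrite big_seq [RHS]big_seq; apply: eq_bigr => r Hr.
by rewrite sum_pred1_seq // HZ.
Qed.

Lemma eqA_sum (Z Z' : alg K) (f : word -> K) :
  eqA Z Z' -> (forall w, f (reduce w) = f w) ->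
  \sum_(r <- Z) r.1 * f r.2 = \sum_(r <- Z') r.1 * f r.2.
Proof.
move=> HZ Hf.
set U0 := undup [seq reduce r.2 | r <- Z ++ Z'].
have HU : uniq U0 by apply: undup_uniq.
rewrite -(eq_bigr _ (fun r _ => congr1 (fun x => r.1 * x) (Hf r.2))).
rewrite -[RHS](eq_bigr _ (fun r _ => congr1 (fun x => r.1 * x) (Hf r.2))).
rewrite (@regroup Z f U0) // ?(@regroup Z' f U0) //.
- by apply: eq_bigr => w _; rewrite HZ.
- by move=> r Hr; rewrite mem_undup; apply: map_f; rewrite mem_cat Hr orbT.
- by move=> r Hr; rewrite mem_undup; apply: map_f; rewrite mem_cat Hr.
Qed.


Implicit Types A B C X Y Z W : alg K.

Lemma eqA_refl X : eqA X X. Proof. by []. Qed.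
Lemma eqA_sym X Y : eqA X Y -> eqA Y X. Proof. by move=> H g; rewrite H. Qed.
Lemma eqA_trans X Y Z : eqA X Y -> eqA Y Z -> eqA X Z. Proof. by move=> H1 H2 g; rewrite H1 H2. Qed.
Lemma eqA_cat X X' Y Y' : eqA X X' -> eqA Y Y' -> eqA (X ++ Y) (X' ++ Y').
Proof. by move=> H1 H2 g; rewrite !coefA_cat H1 H2. Qed.
Lemma eqA_scale c X Y : eqA X Y -> eqA (scaleA c X) (scaleA c Y).
Proof. by move=> H g; rewrite !coefA_scale H. Qed.

Lemma coefA_mul' A B g : coefA (mulA A B) g = \sum_(a <- A) a.1 * \sum_(b <- B) b.1 * ind g (a.2 ++ b.2).
Proof. by rewrite coefA_mul; apply: eq_bigr => a _; rewrite mulr_sumr; apply: eq_bigr => b _; rewrite mulrA. Qed.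

Lemma ind_redR g a w : ind g (a ++ reduce w) = ind g (a ++ w).
Proof. by have := @ind_congr g a (reduce w) w [::] (reduce_idem w); rewrite !cats0. Qed.
Lemma ind_redL g a w : ind g (reduce w ++ a) = ind g (w ++ a).
Proof. by have := @ind_congr g [::] (reduce w) w a (reduce_idem w). Qed.

Lemma mulA_eqR A B B' : eqA B B' -> eqA (mulA A B) (mulA A B').
Proof.
move=> H g; rewrite !coefA_mul'; apply: eq_bigr => a _; congr (_ * _).
by apply: (@eqA_sum B B' (fun w => ind g (a.2 ++ w))) => // w; rewrite ind_redR.
Qed.

Lemma mulA_eqL A A' B : eqA A A' -> eqA (mulA A B) (mulA A' B).
Proof.
move=> H g; rewrite !coefA_mul'.
apply: (@eqA_sum A A' (fun w => \sum_(b <- B) b.1 * ind g (w ++ b.2))) => // w.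
by apply: eq_bigr => b _; rewrite ind_redL.
Qed.

Lemma mulA_assoc A B C : eqA (mulA (mulA A B) C) (mulA A (mulA B C)).
Proof.
move=> g; rewrite !coefAE !sum_mulA /=.
apply: eq_bigr => a _; rewrite sum_mulA /=.
by apply: eq_bigr => b _; apply: eq_bigr => c _; rewrite mulrA catA.
Qed.

Lemma mulA_catL A B C : mulA (A ++ B) C = mulA A C ++ mulA B C.
Proof. by rewrite /mulA map_cat flatten_cat. Qed.

Lemma mulA_catR A B C : eqA (mulA A (B ++ C)) (mulA A B ++ mulA A C).
Proof.
move=> g; rewrite coefA_cat !coefA_mul -big_split; apply: eq_bigr => a _.
by rewrite big_cat.
Qed.

Lemma mulA_1l X : eqA (mulA (oneA K) X) X.
Proof.
move=> g; rewrite coefA_mul coefAE big_cons big_nil addr0; apply: eq_bigr => b _.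
by rewrite mul1r.
Qed.

Lemma mulA_1r X : eqA (mulA X (oneA K)) X.
Proof.
move=> g; rewrite coefA_mul coefAE; apply: eq_bigr => b _.
by rewrite big_cons big_nil addr0 mulr1 cats0.
Qed.

Lemma mulA_scaleL c A B : eqA (mulA (scaleA c A) B) (scaleA c (mulA A B)).
Proof.
move=> g; rewrite coefA_scale !coefA_mul /scaleA big_map mulr_sumr; apply: eq_bigr => a _.
by rewrite mulr_sumr; apply: eq_bigr => b _ /=; rewrite !mulrA.
Qed.

Lemma mulA_scaleR c A B : eqA (mulA A (scaleA c B)) (scaleA c (mulA A B)).
Proof.
move=> g; rewrite coefA_scale !coefA_mul mulr_sumr; apply: eq_bigr => a _.
rewrite /scaleA big_map mulr_sumr; apply: eq_bigr => b _ /=.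
by ring.
Qed.

Lemma coefA_flatten (T : Type) (f : T -> alg K) s g :
  coefA (flatten [seq f i | i <- s]) g = \sum_(i <- s) coefA (f i) g.
Proof. by rewrite coefAE big_flatten big_map; apply: eq_bigr => i _; rewrite coefAE. Qed.

Definition Cm (x : alg K) := in_commA x.

Lemma Cm_eq X Y : eqA X Y -> Cm Y -> Cm X.
Proof. by move=> H [s Hs]; exists s; apply: eqA_trans Hs. Qed.

Lemma Cm_nil : Cm [::].
Proof. by exists [::]. Qed.

Lemma Cm_cat X Y : Cm X -> Cm Y -> Cm (X ++ Y).
Proof.
move=> [s1 H1] [s2 H2]; exists (s1 ++ s2).
by rewrite map_cat flatten_cat; apply: eqA_cat.
Qed.

Lemma Cm_scale c X : Cm X -> Cm (scaleA c X).
Proof.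
move=> [s H]; exists [seq ((c * p.1.1, p.1.2), p.2) | p <- s].
move=> g; rewrite coefA_scale H !coefA_flatten big_map mulr_sumr.
by apply: eq_bigr => p _ /=; rewrite !coefA_scale mulrA.
Qed.

Lemma Cm_comm A B : Cm (mulA A B ++ scaleA (-1) (mulA B A)).
Proof.
exists [:: ((1, A), B)] => g.
by rewrite /= cats0 coefA_scale mul1r.
Qed.

Definition ceq X Y := Cm (X ++ scaleA (-1) Y).

Lemma ceq_Cm X Y : ceq X Y -> Cm Y -> Cm X.
Proof.
move=> H1 H2; apply: (Cm_eq _ (Cm_cat H1 H2)) => g.
by rewrite !coefA_cat coefA_scale; ring.
Qed.

Lemma ceq_eq X Y : eqA X Y -> ceq X Y.
Proof. by move=> H; apply: (Cm_eq _ Cm_nil) => g; rewrite coefA_cat coefA_scale H /coefA big_nil; ring. Qed.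

Lemma ceq_sym X Y : ceq X Y -> ceq Y X.
Proof.
move=> H; apply: (Cm_eq _ (Cm_scale (-1) H)) => g.
by rewrite !(coefA_cat, coefA_scale); ring.
Qed.

Lemma ceq_trans X Y Z : ceq X Y -> ceq Y Z -> ceq X Z.
Proof.
move=> H1 H2; apply: (Cm_eq _ (Cm_cat H1 H2)) => g.
by rewrite !(coefA_cat, coefA_scale); ring.
Qed.

Lemma ceq_cat X X' Y Y' : ceq X X' -> ceq Y Y' -> ceq (X ++ Y) (X' ++ Y').
Proof.
move=> H1 H2; apply: (Cm_eq _ (Cm_cat H1 H2)) => g.
by rewrite !(coefA_cat, coefA_scale); ring.
Qed.

Lemma ceq_scale c X Y : ceq X Y -> ceq (scaleA c X) (scaleA c Y).
Proof.
move=> H; apply: (Cm_eq _ (Cm_scale c H)) => g.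
by rewrite !(coefA_cat, coefA_scale); ring.
Qed.

Lemma ceq_rot A B : ceq (mulA A B) (mulA B A).
Proof. exact: Cm_comm. Qed.

Lemma ceq_refl X : ceq X X.
Proof. exact: ceq_eq. Qed.


Definition Hb X Y Z W : alg K :=
  flatten [seq flatten [seq flatten [seq flatten [seq
    [seq (p.1 * q.1 * r.1 * s.1 * t.1, t.2.1 ++ r.2 ++ t.2.2 ++ s.2) | t <- dbr_word K p.2 q.2]
   | s <- W] | r <- Z] | q <- Y] | p <- X].

Definition pr (X : alg K) (f : word -> K) := \sum_(p <- X) p.1 * f p.2.

Lemma pr_ext X f f' : (forall w, f w = f' w) -> pr X f = pr X f'.
Proof. by move=> H; apply: eq_bigr => p _; rewrite H. Qed.

Lemma pr_mul A B f : pr (mulA A B) f = pr A (fun a => pr B (fun b => f (a ++ b))).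
Proof.
rewrite /pr sum_mulA; apply: eq_bigr => a _; rewrite mulr_sumr; apply: eq_bigr => b _ /=.
by rewrite mulrA.
Qed.

Lemma pr_exch A B (F : word -> word -> K) :
  pr A (fun a => pr B (fun b => F a b)) = pr B (fun b => pr A (fun a => F a b)).
Proof.
rewrite /pr.
transitivity (\sum_(p <- A) \sum_(q <- B) p.1 * q.1 * F p.2 q.2).
  by apply: eq_bigr => p _; rewrite mulr_sumr; apply: eq_bigr => q _; rewrite mulrA.
rewrite exchange_big; apply: eq_bigr => q _; rewrite mulr_sumr; apply: eq_bigr => p _.
by rewrite mulrA (mulrC p.1).
Qed.

Lemma pr_add X f f' : pr X (fun w => f w + f' w) = pr X f + pr X f'.
Proof. by rewrite /pr -big_split; apply: eq_bigr => p _; rewrite mulrDr. Qed.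

Lemma pr_cat X X' f : pr (X ++ X') f = pr X f + pr X' f.
Proof. by rewrite /pr big_cat. Qed.

Lemma pr_scale c X f : pr (scaleA c X) f = c * pr X f.
Proof. by rewrite /pr sum_scaleA mulr_sumr; apply: eq_bigr => p _; rewrite mulrA. Qed.

Lemma pr_one f : pr (oneA K) f = f [::].
Proof. by rewrite /pr big_cons big_nil addr0 mul1r. Qed.

Lemma pr_nil f : pr [::] f = 0.
Proof. by rewrite /pr big_nil. Qed.

Lemma pr_eqA X X' f : eqA X X' -> (forall w, f (reduce w) = f w) -> pr X f = pr X' f.
Proof. exact: eqA_sum. Qed.

Lemma coefA_pr X g : coefA X g = pr X (ind g).
Proof. exact: coefAE. Qed.

Lemma coefH X Y Z W g : coefA (Hb X Y Z W) g =
  pr X (fun a => pr Y (fun b => pr Z (fun r => pr W (fun s => S g [::] a b r s)))).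
Proof.
rewrite /pr coefA_flatten; apply: eq_bigr => p _.
rewrite coefA_flatten !mulr_sumr; apply: eq_bigr => q _.
rewrite coefA_flatten !mulr_sumr; apply: eq_bigr => r _.
rewrite coefA_flatten !mulr_sumr; apply: eq_bigr => s _.
rewrite coefAE big_map /S !mulr_sumr; apply: eq_bigr => t _ /=.
by rewrite /ind; ring.
Qed.

Lemma HLA X1 X2 Y Z W : eqA (Hb (mulA X1 X2) Y Z W) (Hb X1 Y (mulA X2 Z) W ++ Hb X2 Y (mulA Z X1) W).
Proof.
move=> g; rewrite coefA_cat !coefH pr_mul.
under [X in _ = X + _]pr_ext => a1 do under pr_ext => b do rewrite pr_mul.
under [X in _ = X + _]pr_ext => a1 do rewrite pr_exch.
under [X in _ = _ + X]pr_ext => a2 do under pr_ext => b do rewrite pr_mul.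
under [X in _ = _ + X]pr_ext => a2 do under pr_ext => b do rewrite pr_exch.
under [X in _ = _ + X]pr_ext => a2 do rewrite pr_exch.
rewrite [X in _ = _ + X]pr_exch -pr_add; apply: pr_ext => a1.
rewrite -pr_add; apply: pr_ext => a2.
rewrite -pr_add; apply: pr_ext => b.
rewrite -pr_add; apply: pr_ext => r.
rewrite -pr_add; apply: pr_ext => s.
by rewrite SL1.
Qed.


Lemma prH X Y Z W g P Q : pr (Hb X Y Z W) (fun w => ind g (P ++ w ++ Q)) =
  pr X (fun a => pr Y (fun b => pr Z (fun r => pr W (fun s => S g P a b r (s ++ Q))))).
Proof.
rewrite /pr /Hb big_flatten big_map; apply: eq_bigr => p _.
rewrite big_flatten big_map !mulr_sumr; apply: eq_bigr => q _.
rewrite big_flatten big_map !mulr_sumr; apply: eq_bigr => r _.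
rewrite big_flatten big_map !mulr_sumr; apply: eq_bigr => s _.
rewrite big_map /S !mulr_sumr; apply: eq_bigr => t _ /=.
rewrite -!catA /ind; ring.
Qed.

Lemma prHl X Y Z W g P : pr (Hb X Y Z W) (fun w => ind g (P ++ w)) =
  pr X (fun a => pr Y (fun b => pr Z (fun r => pr W (fun s => S g P a b r s)))).
Proof.
have := prH X Y Z W g P [::]; under pr_ext => w do rewrite cats0.
move=> ->; apply: pr_ext => a; apply: pr_ext => b; apply: pr_ext => r; apply: pr_ext => s.
by rewrite cats0.
Qed.

Lemma prHr X Y Z W g Q : pr (Hb X Y Z W) (fun w => ind g (w ++ Q)) =
  pr X (fun a => pr Y (fun b => pr Z (fun r => pr W (fun s => S g [::] a b r (s ++ Q))))).
Proof. exact: (prH X Y Z W g [::] Q). Qed.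

Lemma coefA_mulpr A B g : coefA (mulA A B) g = pr A (fun a => pr B (fun b => ind g (a ++ b))).
Proof. by rewrite coefA_pr pr_mul. Qed.

Lemma pr_zero X : pr X (fun _ => 0) = 0.
Proof. by rewrite /pr big1 // => p _; rewrite mulr0. Qed.

Lemma HLB X Y1 Y2 Z W : eqA (Hb X (mulA Y1 Y2) Z W) (Hb X Y1 Z (mulA Y2 W) ++ mulA Y1 (Hb X Y2 Z W)).
Proof.
move=> g; rewrite coefA_cat !coefH coefA_mulpr.
under pr_ext => a do rewrite pr_mul.
under [X in _ = X + _]pr_ext => a do under pr_ext => b1 do under pr_ext => r do rewrite pr_mul.
under [X in _ = X + _]pr_ext => a do under pr_ext => b1 do rewrite pr_exch.
under [X in _ = _ + X]pr_ext => b1 do rewrite prHl.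
rewrite [X in _ = _ + X]pr_exch -pr_add; apply: pr_ext => a.
rewrite -pr_add; apply: pr_ext => b1.
rewrite -pr_add; apply: pr_ext => b2.
rewrite -pr_add; apply: pr_ext => r.
rewrite -pr_add; apply: pr_ext => s.
by rewrite SL2.
Qed.

Lemma Hr X Y Z W Y1 : eqA (Hb X Y Z (mulA W Y1)) (mulA (Hb X Y Z W) Y1).
Proof.
move=> g; rewrite !coefH coefA_mulpr [RHS]pr_exch.
under [RHS]pr_ext => c do rewrite prHr.
under pr_ext => a do under pr_ext => b do under pr_ext => r do rewrite pr_mul.
rewrite [RHS]pr_exch; apply: pr_ext => a.
rewrite [RHS]pr_exch; apply: pr_ext => b.
rewrite [RHS]pr_exch; apply: pr_ext => r.
by rewrite [RHS]pr_exch.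
Qed.

Lemma HZ X Y Z Z' W : eqA Z Z' -> eqA (Hb X Y Z W) (Hb X Y Z' W).
Proof.
move=> HZZ g; rewrite !coefH; apply: pr_ext => a; apply: pr_ext => b.
apply: pr_eqA => // r; apply: pr_ext => s.
by apply: S_congr_r; rewrite reduce_idem.
Qed.

Lemma HW X Y Z W W' : eqA W W' -> eqA (Hb X Y Z W) (Hb X Y Z W').
Proof.
move=> HWW g; rewrite !coefH; apply: pr_ext => a; apply: pr_ext => b.
apply: pr_ext => r; apply: pr_eqA => // s.
by apply: S_congr_s; rewrite reduce_idem.
Qed.

Lemma H0X Y Z W : eqA (Hb (oneA K) Y Z W) [::].
Proof.
move=> g; rewrite coefH pr_one /coefA big_nil.
rewrite -[RHS](pr_zero Y); apply: pr_ext => b.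
rewrite -[RHS](pr_zero Z); apply: pr_ext => r.
rewrite -[RHS](pr_zero W); apply: pr_ext => s.
by rewrite /S big_nil.
Qed.

Lemma H0Y X Z W : eqA (Hb X (oneA K) Z W) [::].
Proof.
move=> g; rewrite coefH /coefA big_nil.
rewrite -[RHS](pr_zero X); apply: pr_ext => a; rewrite pr_one.
rewrite -[RHS](pr_zero Z); apply: pr_ext => r.
rewrite -[RHS](pr_zero W); apply: pr_ext => s.
rewrite /S /dbr_word /=.
by elim: (iota 0 (size a)) => [|i l IH]; rewrite ?big_nil //= big_cat /= IH big_nil addr0.
Qed.


Lemma bracket_H X Y : eqA (bracketK X Y) (Hb X Y (oneA K) (oneA K)).
Proof.
move=> g; rewrite coefH /bracketK coefA_flatten /pr; apply: eq_bigr => p _.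
rewrite coefA_flatten !mulr_sumr; apply: eq_bigr => q _.
rewrite !big_cons !big_nil /= !addr0 !mul1r S_red_a S_red_b /S !mulr_sumr coefAE big_map.
apply: eq_bigr => t _ /=.
by rewrite !cats0 /ind; ring.
Qed.

Local Notation h := (hA K).
Local Notation P n := (powA h n).

Lemma pow_add a b : eqA (mulA (P a) (P b)) (P (a + b)).
Proof.
elim: a => [|a IH]; first by rewrite add0n; apply: mulA_1l.
rewrite addSn /=; apply: eqA_trans (mulA_assoc _ _ _) _.
exact: mulA_eqR.
Qed.

Lemma P1 : eqA (P 1) h.
Proof. exact: mulA_1r. Qed.

Lemma pow_r a : eqA (mulA (P a) h) (P a.+1).
Proof.
apply: eqA_trans (mulA_eqR _ (eqA_sym P1)) _.
by rewrite -[a.+1]addn1; apply: pow_add.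
Qed.

Lemma expX Y W : (forall n, Cm (Hb h Y (P n) W)) ->
  forall N Z c, eqA Z (P c) -> Cm (Hb (P N) Y Z W).
Proof.
move=> Hyp; elim=> [|N IH] Z c HZc.
  exact: (Cm_eq (H0X _ _ _) Cm_nil).
apply: (Cm_eq (HLA _ _ _ _ _)); apply: Cm_cat.
  apply: (Cm_eq (HZ _ _ _ (eqA_trans (mulA_eqR _ HZc) (pow_add N c)))).
  exact: Hyp.
apply: (IH _ c.+1).
exact: eqA_trans (mulA_eqL _ HZc) (pow_r c).
Qed.

Lemma expY Z : (forall m, Cm (Hb h h Z (P m))) ->
  forall M W d, eqA W (P d) -> Cm (Hb h (P M) Z W).
Proof.
move=> Hyp; elim=> [|M IH] W d HWd.
  exact: (Cm_eq (H0Y _ _ _) Cm_nil).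
apply: (Cm_eq (HLB _ _ _ _ _)); apply: Cm_cat.
  apply: (Cm_eq (HW _ _ _ (eqA_trans (mulA_eqR _ HWd) (pow_add M d)))).
  exact: Hyp.
apply: (ceq_Cm (ceq_rot _ _)).
apply: (Cm_eq (eqA_sym (Hr _ _ _ _ _))).
apply: (IH _ d.+1).
exact: eqA_trans (mulA_eqL _ HWd) (pow_r d).
Qed.

Definition e1 (w : word) : alg K := [:: (1, w)].
Definition Ap : alg K := e1 [:: U; V] ++ scaleA (-1) (e1 [:: V; U]).
Definition Sx : alg K := e1 [:: Vi] ++ e1 [:: Vi; Ui] ++ e1 [:: Vi; Ui; Vi] ++ e1 [:: Ui] ++
   e1 [:: Ui; Vi; Ui] ++ e1 [:: Ui; Vi; Ui; Vi].
Definition UVl : alg K := e1 [:: Ui; Vi].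
Definition Xl : alg K := scaleA (-1) (e1 [:: U] ++ e1 [:: Vi]).

Lemma tbl (F : word -> word -> K) :
  pr h (fun a => pr h (fun b => \sum_(t <- dbr_word K a b) t.1 * F (reduce t.2.1) (reduce t.2.2))) =
  pr Ap (fun a => pr (oneA K) (fun c => F a c)) + pr (oneA K) (fun a => pr Sx (fun c => F a c)) +
  (-1) * pr (h ++ oneA K) (fun a => pr UVl (fun c => F a c)).
Proof.
rewrite /pr /= !big_cons !big_nil /=.
ring.
Qed.

Lemma pr_sum (T : Type) X (L : seq T) (F : T -> word -> K) :
  pr X (fun w => \sum_(t <- L) F t w) = \sum_(t <- L) pr X (F t).
Proof.
rewrite /pr exchange_big /=; apply: eq_bigr => p _; by rewrite mulr_sumr.
Qed.

Lemma pr_scal X c f : pr X (fun w => c * f w) = c * pr X f.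
Proof. by rewrite /pr mulr_sumr; apply: eq_bigr => p _; ring. Qed.

Definition Phi Z W g x y := pr Z (fun r => pr W (fun s => ind g (x ++ r ++ y ++ s))).

Lemma Phi_red Z W g x y : Phi Z W g (reduce x) (reduce y) = Phi Z W g x y.
Proof.
apply: pr_ext => r; apply: pr_ext => s.
by symmetry; exact: (indF g [::] x r y s).
Qed.

Lemma HtoPhi Z W g a b : pr Z (fun r => pr W (fun s => S g [::] a b r s)) =
  \sum_(t <- dbr_word K a b) t.1 * Phi Z W g t.2.1 t.2.2.
Proof.
rewrite /S.
under pr_ext => r do rewrite pr_sum.
rewrite pr_sum; apply: eq_bigr => t _.
under pr_ext => r do rewrite pr_scal.
by rewrite pr_scal.
Qed.

Definition Mon A C Z W := mulA A (mulA Z (mulA C W)).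

Lemma coefMon A C Z W g : coefA (Mon A C Z W) g = pr A (fun a => pr C (fun c => Phi Z W g a c)).
Proof.
rewrite coefA_mulpr; apply: pr_ext => a.
rewrite pr_mul; under pr_ext => r do rewrite pr_mul.
by rewrite pr_exch.
Qed.

Definition E Z W := Mon Ap (oneA K) Z W ++ Mon (oneA K) Sx Z W ++ scaleA (-1) (Mon (h ++ oneA K) UVl Z W).

Lemma I1 Z W : eqA (Hb h h Z W) (E Z W).
Proof.
move=> g; rewrite coefH /E coefA_cat (coefA_cat (Mon _ _ _ _)) coefA_scale !coefMon addrA.
under pr_ext => a do under pr_ext => b do rewrite HtoPhi.
under pr_ext => a do under pr_ext => b do under eq_bigr => t _ do rewrite -Phi_red.
by rewrite tbl.
Qed.

Lemma D_id (F : word -> K) :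
  pr Ap (fun a => F (reduce a)) + pr Sx (fun a => F (reduce a)) +
  (-1) * pr UVl (fun a => pr h (fun c => F (reduce (a ++ c))) + F (reduce a)) =
  pr h (fun a => pr Xl (fun x => F (reduce (a ++ x)))) +
  (-1) * pr Xl (fun x => pr h (fun a => F (reduce (x ++ a)))).
Proof.
rewrite /pr /= !big_cons !big_nil /=.
ring.
Qed.

Lemma Fin_eq Hn : eqA (mulA Ap Hn ++ mulA Sx Hn ++ scaleA (-1) (mulA UVl (mulA h Hn ++ Hn)))
  (mulA h (mulA Xl Hn) ++ scaleA (-1) (mulA Xl (mulA h Hn))).
Proof.
move=> g.
set Psi := fun w => pr Hn (fun r => ind g (w ++ r)).
have HPsi : forall w, Psi (reduce w) = Psi w.
  by move=> w; apply: pr_ext => r; rewrite ind_redL.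
have HM : forall A w, pr (mulA A Hn) (fun b => ind g (w ++ b)) = pr A (fun x => Psi (w ++ x)).
  move=> A w; rewrite pr_mul; apply: pr_ext => x; apply: pr_ext => r; by rewrite catA.
rewrite (coefA_cat (mulA Ap Hn)) (coefA_cat (mulA Sx Hn)) coefA_scale.
rewrite (coefA_cat (mulA h (mulA Xl Hn))) coefA_scale !coefA_mulpr.
have E1 : forall A, pr A (fun a => pr Hn (fun b => ind g (a ++ b))) = pr A (fun a => Psi (reduce a)).
  by move=> A; apply: pr_ext => a; rewrite HPsi.
rewrite !E1 addrA.
under [X in _ + -1 * X = _]pr_ext => a do rewrite pr_cat HM.
under [X in _ + -1 * X = _]pr_ext => a do under pr_ext => c do rewrite -HPsi.
have E2 : forall a, pr Hn (fun b => ind g (a ++ b)) = Psi (reduce a) by move=> a; rewrite HPsi.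
under [X in _ + -1 * X = _]pr_ext => a do rewrite E2.
under [X in _ = X + _]pr_ext => a do rewrite HM.
under [X in _ = X + _]pr_ext => a do under pr_ext => c do rewrite -HPsi.
under [X in _ = _ + -1 * X]pr_ext => a do rewrite HM.
under [X in _ = _ + -1 * X]pr_ext => a do under pr_ext => c do rewrite -HPsi.
exact: D_id.
Qed.

Lemma core p q : Cm (Hb h h (P p) (P q)).
Proof.
pose n := (p + q)%N.
apply: (Cm_eq (I1 (P p) (P q))).
have HZW : eqA (mulA (P p) (P q)) (P n) := pow_add p q.
have HWZ : eqA (mulA (P q) (P p)) (P n) by rewrite /n addnC; apply: pow_add.
pose Fin := mulA Ap (P n) ++ mulA Sx (P n) ++ scaleA (-1) (mulA UVl (mulA h (P n) ++ P n)).
apply: (@ceq_Cm _ Fin).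
  apply: ceq_cat; last apply: ceq_cat.
  - apply: ceq_eq; exact: mulA_eqR _ (eqA_trans (mulA_eqR _ (mulA_1l _)) HZW).
  - apply: ceq_trans (ceq_eq (mulA_1l _)) _.
    apply: ceq_trans (ceq_rot _ _) _.
    exact: ceq_eq (eqA_trans (mulA_assoc _ _ _) (mulA_eqR _ HWZ)).
  - apply: ceq_scale.
    apply: ceq_trans (ceq_eq (eqA_sym (mulA_assoc _ _ _))) _.
    apply: ceq_trans (ceq_rot _ _) _.
    apply: ceq_eq; apply: eqA_trans (mulA_assoc _ _ _) _; apply: mulA_eqR.
    rewrite mulA_catL.
    apply: eqA_trans (mulA_catR _ _ _) _; apply: eqA_cat.
      have Ea : (q + p.+1 = n.+1)%N by rewrite /n addnS addnC.
      by have := pow_add q p.+1; rewrite Ea.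
    exact: eqA_trans (mulA_eqR _ (mulA_1l _)) HWZ.
apply: (Cm_eq (Fin_eq (P n))).
apply: (@ceq_Cm _ (mulA h (mulA Xl (P n)) ++ scaleA (-1) (mulA (mulA Xl (P n)) h))); last exact: Cm_comm.
apply: ceq_cat; first exact: ceq_refl.
apply: ceq_scale; apply: ceq_eq.
apply: eqA_trans (mulA_eqR _ (eqA_sym (pow_r n))) _.
exact: eqA_sym (mulA_assoc _ _ _).
Qed.

Lemma main_gen N M : Cm (bracketK (P N) (P M)).
Proof.
apply: (Cm_eq (bracket_H _ _)).
apply: (@expX _ _ _ N (oneA K) 0) => // n.
apply: (@expY _ _ M (oneA K) 0) => // m.
exact: core.
Qed.

End S2.

End Aux.

Theorem mainTheorem2 (R : realType) (N M : nat) :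
  (0 < N)%N -> (0 < M)%N ->
  in_commA (bracketK (powA (hA (R[i])%C) N) (powA (hA (R[i])%C) M)).
Proof.
move=> _ _; exact: (Aux.main_gen (R[i])%C N M).
Qed.
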